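(* Let $G$ be a connected (finite, simple) graph, $\mathcal{F}$ a maximum induced forest of $G$, $S=V(G)\setminus V(\mathcal{F})$, $H$ the contracted graph, and $B$ a skeleton of $H$ with the maximum possible number of 2-edges among all skeletons (all as defined in the context). Let $L_S$ be the set of vertices of $S$ that are leaves of $B$. Then for every vertex in $L_S$, the unique edge of $B$ incident to it is a 2-edge.
   Context: A maximum induced forest of $G$ is an induced forest of $G$ with the maximum number of vertices. Let $\mathcal{T}$ be the set of connected components (trees) of $\mathcal{F}$ and $S=V(G)\setminus V(\mathcal{F})$. The graph $H$ has vertex set $\{x_T : T\in\mathcal{T}\}\cup S$ (the $x_T$ are called tree vertices, the vertices of $S$ non-tree vertices) and edge set consisting of all edges of $G[S]$ together with all pairs $ux_T$ with $u\in S$, $T\in\mathcal{T}$ such that $u$ has at least one neighbor in $V(T)$ in $G$. An edge $ux_T$ of $H$ is a 2-edge if $u$ has at least two neighbors in $V(T)$ in $G$; all other edges of $H$ (including all edges with both endpoints in $S$) are 1-edges. A skeleton is a spanning tree of $H$ rooted at some tree vertex, with all edges directed towards the root (an in-arborescence). A leaf of $B$ is a vertex of total degree 1 in $B$. *)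

(* Defs.v *)
From mathcomp Require Import all_boot.
Set Implicit Arguments. Unset Strict Implicit. Unset Printing Implicit Defensive.

(* A finite simple graph: vertex type V : finType, adjacency e : rel V,
   assumed symmetric and irreflexive in the theorem. *)

Definition is_cycle (T : eqType) (r : rel T) (s : seq T) : bool :=
  [&& uniq s, 3 <= size s & cycle r s].

Definition acyclic (T : eqType) (r : rel T) : Prop :=
  forall s : seq T, ~~ is_cycle r s.

(* vertices of H: inl T for a tree T, inr u for u in S = V \ F *)
Notation HV V := ({set V} + V)%type.

Section Contraction.
Variables (V : finType) (e : rel V).

Definition induced_adj (F : {set V}) : rel V :=
  fun x y => [&& x \in F, y \in F & e x y].

Definition induced_forest (F : {set V}) : Prop := acyclic (induced_adj F).

Definition max_induced_forest (F : {set V}) : Prop :=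
  induced_forest F /\ forall F' : {set V}, induced_forest F' -> #|F'| <= #|F|.

Definition trees (F : {set V}) : {set {set V}} :=
  [set [set y | connect (induced_adj F) x y] | x in F].


Definition Hvert (F : {set V}) : {set (HV V)} :=
  (inl @: trees F) :|: (inr @: ~: F).

Definition Hadj (F : {set V}) : rel (HV V) :=
  fun a b =>
    match a, b with
    | inr u, inr v => [&& u \in ~: F, v \in ~: F & e u v]
    | inr u, inl T | inl T, inr u =>
        [&& u \in ~: F, T \in trees F & [exists y in T, e u y]]
    | inl _, inl _ => false
    end.

Definition Hedges (F : {set V}) : {set {set (HV V)}} :=
  [set E : {set HV V} | [exists a, exists b, (E == [set a; b]) && Hadj F a b]].

Definition two_pair (a b : (HV V)) : bool :=
  match a, b with
  | inr u, inl T | inl T, inr u => 1 < #|[set y in T | e u y]|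
  | _, _ => false
  end.

Definition is_2edge (E : {set (HV V)}) : bool :=
  [exists a, exists b, (E == [set a; b]) && two_pair a b].

Definition eadj (EB : {set {set (HV V)}}) : rel (HV V) := fun a b => [set a; b] \in EB.

(* A skeleton: a spanning tree of H (edge set EB), rooted at a tree vertex r;
   edges are oriented towards r (the orientation is determined by r and EB). *)
Definition skeleton (F : {set V}) (r : (HV V)) (EB : {set {set (HV V)}}) : Prop :=
  [/\ r \in inl @: trees F,
      EB \subset Hedges F,
      {in Hvert F &, forall a b, connect (eadj EB) a b}
    & acyclic (eadj EB)].

Definition num_2edges (EB : {set {set (HV V)}}) : nat := #|[set E in EB | is_2edge E]|.

Definition degB (EB : {set {set (HV V)}}) (a : (HV V)) : nat := #|[set E in EB | a \in E]|.

End Contraction.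

(* Main.v *)
Require Import Defs.
From mathcomp Require Import all_boot.
Set Implicit Arguments. Unset Strict Implicit. Unset Printing Implicit Defensive.

Lemma is_cycle_rot (T : eqType) (r : rel T) k (s : seq T) :
  is_cycle r (rot k s) = is_cycle r s.
Proof. by rewrite /is_cycle rot_uniq size_rot rot_cycle. Qed.

Lemma cycle_at (T : eqType) (r : rel T) (s : seq T) (x : T) :
  is_cycle r s -> x \in s ->
  exists n p t, [/\ r x n, r p x, path r n (rcons t p) & uniq (x :: n :: rcons t p)].
Proof.
move=> cs xs; case/splitPr: xs cs => p1 p2 cs.
have : is_cycle r (x :: p2 ++ p1).
  by rewrite -cat_cons -rot_size_cat is_cycle_rot.
case: (p2 ++ p1) => [|n t]; first by case/and3P.
case/lastP: t => [|t p]; first by case/and3P.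
case/and3P=> u _ c; exists n, p, t; split => //.
- by move: c; rewrite /= => /andP[].
- by move: c; rewrite /= rcons_path => /andP[_ /andP[_]]; rewrite last_rcons.
- by move: c; rewrite /= rcons_path => /andP[_ /andP[]].
Qed.

Lemma induced_sub (V : finType) (e : rel V) F u :
  {in predC1 u &, subrel (induced_adj e (u |: F)) (induced_adj e F)}.
Proof.
move=> x y /= xu yu; rewrite /induced_adj !in_setU1 (negbTE xu) (negbTE yu) /=.
by [].
Qed.

Lemma two_nbrs (V : finType) (e : rel V) (e_sym : symmetric e) F u s :
  induced_forest e F -> u \notin F -> is_cycle (induced_adj e (u |: F)) s ->
  exists T, T \in trees e F /\ 1 < #|[set y in T | e u y]|.
Proof.
move=> fF uF cs.
case: (boolP (u \in s)) => us; last first.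
  exfalso; apply: (negP (fF s)); move: cs; rewrite /is_cycle => /and3P[-> -> c].
  rewrite /=; apply: (sub_in_cycle (@induced_sub V e F u)) c.
  by apply/allP => y ys /=; apply/eqP => yu; subst; rewrite ys in us.
have [n [p [t [un pu pth uq]]]] := cycle_at cs us.
have all1 : all (predC1 u) (n :: rcons t p).
  apply/allP => y ys /=; apply/eqP => yu; subst.
  by move: uq; rewrite /= ys.
have pth' := sub_in_path (@induced_sub V e F u) all1 pth.
have nF : n \in F.
  by move: un => /and3P[_]; rewrite in_setU1; case/orP=> // /eqP nu; move: all1 => /= /andP[]; rewrite nu eqxx.
exists [set y | connect (induced_adj e F) n y]; split.
  by apply/imsetP; exists n.
have np : n != p.
  apply/eqP => np; subst; move: uq => /= /and3P[_ +]; by rewrite mem_rcons mem_head.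
apply: (leq_trans _ (subset_leq_card (_ : [set n; p] \subset _))).
  by rewrite cards2 np.
apply/subsetP => y; rewrite !inE => /orP[]/eqP->.
  by rewrite connect0 /=; move: un => /and3P[_ _].
apply/andP; split.
  by apply/connectP; exists (rcons t p) => //; rewrite last_rcons.
by move: pu => /and3P[_ _]; rewrite e_sym.
Qed.

Theorem corollary2 (V : finType) (e : rel V)
    (e_sym : symmetric e) (e_irr : irreflexive e)
    (G_conn : forall x y : V, connect e x y)
    (F : {set V}) (F_max : max_induced_forest e F)
    (r : HV V) (EB : {set {set HV V}})
    (B_skel : skeleton e F r EB)
    (B_max : forall (r' : HV V) (EB' : {set {set HV V}}),
        skeleton e F r' EB' -> num_2edges e EB' <= num_2edges e EB) :
  forall u : V, u \in ~: F -> degB EB (inr u) = 1 ->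
    forall E : {set HV V}, E \in EB -> inr u \in E -> is_2edge e E.
Proof.
move=> u uS deg1 E EE uE.
case: (boolP (is_2edge e E)) => // nE2; exfalso.
have EBu : forall E', E' \in EB -> inr u \in E' -> E' = E.
  move: deg1; rewrite /degB => /eqP/cards1P[E1 hE1] E' E'B uE'.
  have h1 : E \in [set E0 in EB | inr u \in E0] by rewrite inE EE uE.
  have h2 : E' \in [set E0 in EB | inr u \in E0] by rewrite inE E'B uE'.
  by move: h1 h2; rewrite hE1 !inE => /eqP-> /eqP->.
case: B_skel => rT EBH Bconn Bacyc.
have [w Ew] : exists w, E = [set inr u; w].
  move/subsetP: EBH => /(_ E EE); rewrite inE => /existsP[a /existsP[b /andP[/eqP Eab _]]].
  move: uE; rewrite Eab !inE => /orP[]/eqP<-; first by exists b.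
  by exists a; rewrite setUC.
have step1 : forall T, T \in trees e F -> ~ (1 < #|[set y in T | e u y]|).
  move=> T TF T2.
  set N : {set HV V} := [set inr u; inl T].
  set EB' := N |: (EB :\ E).
  have N2 : is_2edge e N.
    by apply/existsP; exists (inr u); apply/existsP; exists (inl T); rewrite eqxx /=.
  have NE : N != E by apply/eqP => NE; rewrite -NE N2 in nE2.
  have uN : inr u \in N by rewrite !inE eqxx.
  have adjU : forall y, eadj EB' (inr u) y -> y = inl T.
    move=> y; rewrite /eadj /EB' in_setU1 => /orP[/eqP hN|].
      have : y \in N by rewrite -hN !inE eqxx orbT.
      rewrite !inE => /orP[]/eqP // yu; subst y.
      have : inl T \in [set (inr u : HV V); inr u] by rewrite hN !inE eqxx orbT.
      by rewrite !inE orbb.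
    rewrite in_setD1 => /andP[ne yB].
    by rewrite (EBu _ yB) ?eqxx // in ne; rewrite !inE eqxx.
  have subadj : {in predC1 (inr u) &, subrel (eadj EB') (eadj EB)}.
    move=> x y /= xu yu; rewrite /eadj /EB' in_setU1 => /orP[/eqP hN|].
      have : inr u \in [set x; y] by rewrite hN.
      by rewrite !inE !(eq_sym (inr u)) (negbTE xu) (negbTE yu).
    by rewrite in_setD1 => /andP[].
  set f := fun x : HV V => if x == inr u then w else x.
  have fstep : forall x y, eadj EB x y -> f x = f y \/ eadj EB' (f x) (f y).
    move=> x y xy; rewrite /f.
    case: (eqVneq x (inr u)) => [xu|xu].
      subst x; left.
      have : y \in E by rewrite -(EBu _ xy) ?inE ?eqxx ?orbT.
      by rewrite Ew !inE => /orP[]/eqP->; rewrite ?eqxx //; case: eqP.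
    case: (eqVneq y (inr u)) => [yu|yu].
      subst y; left.
      have : x \in E by rewrite -(EBu _ xy) ?inE ?eqxx ?orbT.
      by rewrite Ew !inE (negbTE xu) => /eqP.
    right; move: xy; rewrite /eadj /EB' in_setU1 in_setD1 => ->; rewrite andbT; apply/orP; right.
    apply/eqP => xyE; have : inr u \in [set x; y] by rewrite xyE.
    by rewrite !inE eq_sym (negbTE xu) eq_sym (negbTE yu).
  have fconn : forall x y, connect (eadj EB) x y -> connect (eadj EB') (f x) (f y).
    move=> x y /connectP[p pth ->]; elim: p x pth => [|z p IH] x /=.
      by move=> _; exact: connect0.
    case/andP=> xz pth; apply: connect_trans (IH _ pth).
    by case: (fstep _ _ xz) => [->|h]; [exact: connect0 | exact: connect1].
  have Nin : N \in EB' by rewrite /EB' setU11.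
  have sk : skeleton e F r EB'.
    split => //.
    - apply/subsetP => E0; rewrite /EB' in_setU1 => /orP[/eqP->|].
        rewrite inE; apply/existsP; exists (inr u); apply/existsP; exists (inl T).
        rewrite eqxx /= uS TF /=.
        have : 0 < #|[set y in T | e u y]| by apply: leq_trans T2.
        rewrite card_gt0 => /set0Pn[y]; rewrite inE => /andP[yT ey].
        by apply/existsP; exists y; rewrite yT.
      by rewrite in_setD1 => /andP[_]; apply: (subsetP EBH).
    - set g := fun x : HV V => if x == inr u then inl T else x.
      have gV : forall a, a \in Hvert e F -> g a \in Hvert e F.
        move=> a aV; rewrite /g; case: (a =P inr u) => // _.
        by rewrite /Hvert inE; apply/orP; left; apply/imsetP; exists T.
      have gu : forall a, g a != inr u.
        by move=> a; rewrite /g; case: (a =P inr u) => // /eqP.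
      have fg : forall a, f (g a) = g a by move=> a; rewrite /f (negbTE (gu a)).
      have ag : forall a, connect (eadj EB') a (g a) /\ connect (eadj EB') (g a) a.
        move=> a; rewrite /g; case: (a =P inr u) => [->|_]; last by split; exact: connect0.
        by split; apply: connect1; rewrite /eadj // setUC.
      move=> a b aV bV; apply: connect_trans (proj1 (ag a)) _.
      apply: connect_trans _ (proj2 (ag b)).
      by rewrite -(fg a) -(fg b); apply: fconn; apply: Bconn; apply: gV.
    - move=> s; apply/negP => cs.
      case: (boolP (inr u \in s)) => us; last first.
        apply: (negP (Bacyc s)); move: cs; rewrite /is_cycle => /and3P[-> -> c] /=.
        apply: (sub_in_cycle subadj) c.
        by apply/allP => y ys /=; apply/eqP => yu; subst; rewrite ys in us.
      have [n [p [t [un pu _ uq]]]] := cycle_at cs us.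
      have n1 := adjU _ un.
      have p1 : p = inl T by apply: adjU; rewrite /eadj setUC.
      move: uq; rewrite /= n1 p1 mem_rcons mem_head /=.
      by rewrite andbF.
  have := B_max _ _ sk; rewrite /num_2edges.
  set A := [set E0 in EB | is_2edge e E0].
  have NA : N \notin A.
    by rewrite inE; apply/negP => /andP[NB _]; move/eqP: NE; apply; apply: EBu.
  have sub : N |: A \subset [set E0 in EB' | is_2edge e E0].
    apply/subsetP => E0; rewrite in_setU1 => /orP[/eqP->|]; first by rewrite inE Nin N2.
    move=> E0A; have /andP[E0B E02] : (E0 \in EB) && is_2edge e E0 by rewrite inE in E0A.
    rewrite inE E02 andbT /EB' in_setU1 in_setD1 E0B andbT.
    by apply/orP; right; apply/eqP => h; subst; rewrite E02 in nE2.
  have := subset_leq_card sub; rewrite cardsU1 NA => h1 h2.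
  by have := leq_trans h1 h2; rewrite ltnn.
have fU : induced_forest e (u |: F).
  move=> s; apply/negP => cs.
  have uF : u \notin F by rewrite inE in uS.
  have [T [TF T2]] := two_nbrs e_sym F_max.1 uF cs.
  exact: step1 TF T2.
have := F_max.2 _ fU; rewrite cardsU1.
by rewrite inE in uS; rewrite uS ltnn.
Qed.
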